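(* Fix $p\in(0,1]$ and let $(G_n)$ be a sequence of graphs with $\min_{u\in V}\delta_u=\omega(\log n)$. For each $n$ run the $(1,p,\mathcal B)$-Edge-Majority dynamics (equivalently the $(1,p,\mathcal B)$-Node-Majority dynamics) on $G_n$ from an arbitrary initial configuration $\mathbf X^{(0)}$. Then there exists $T=T(p)$ such that $\Pr(\tau\le T)=1-o(1)$.
   Context: $G_n=(V,E)$, $V=\{1,\dots,n\}$, $N(u)$ neighbourhood, $\delta_u=|N(u)|$, $\mathrm{vol}(S)=\sum_{v\in S}\delta_v$; asymptotics as $n\to\infty$. States in $\{\mathcal R,\mathcal B\}$; $B^{(t)}$ is the set of $\mathcal B$ nodes at round $t$, and $\tau=\inf\{t\ge0:\mathrm{vol}(B^{(t)})/\mathrm{vol}(V)>1/2\}$. $(1,p,\mathcal B)$-Edge-Majority: in each round $t\ge1$ every node $u$ independently picks one neighbour $v$ uniformly at random; with probability $p$ (independently) $u$ takes state $\mathcal B$, and otherwise it copies the state of $v$ at round $t-1$. *)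

(* Defs.v *)
From HB Require Import structures.
From mathcomp Require Import all_boot all_order all_algebra.
From mathcomp Require Import all_classical all_reals all_analysis.
Set Implicit Arguments. Unset Strict Implicit. Unset Printing Implicit Defensive.
Import Order.TTheory GRing.Theory Num.Theory.
Local Open Scope ring_scope.

Definition simple_graph (n : nat) (G : rel 'I_n) : Prop :=
  (forall u v, G u v = G v u) /\ (forall u, ~~ G u u).

Definition nbhd n (G : rel 'I_n) (u : 'I_n) : {set 'I_n} := [set v | G u v].
Definition deg n (G : rel 'I_n) (u : 'I_n) : nat := #|nbhd G u|.
Definition vol n (G : rel 'I_n) (S : {set 'I_n}) : nat := (\sum_(v in S) deg G v)%N.

(* configurations: true = state B, false = state R *)
Definition config (n : nat) := {ffun 'I_n -> bool}.
Definition blue n (x : config n) : {set 'I_n} := [set u | x u].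

(* Probability that node u is in state B at round t given configuration x at
   round t-1, for (1,p,B)-Edge-Majority: u picks v in N(u) uniformly at random;
   with prob. p it takes B, otherwise it copies x v.
   Convention for isolated nodes (irrelevant asymptotically): take B w.p. p. *)
Definition probB (R : realType) (p : R) n (G : rel 'I_n) (x : config n) (u : 'I_n) : R :=
  if deg G u == 0%N then p
  else \sum_(v in nbhd G u) ((deg G u)%:R^-1 * (p + (1 - p) * (x v)%:R)).

Definition trans (R : realType) (p : R) n (G : rel 'I_n) (x y : config n) : R :=
  \prod_(u : 'I_n) (if y u then probB p G x u else 1 - probB p G x u).

Definition majB (R : realType) n (G : rel 'I_n) (x : config n) : bool :=
  (1 / 2 : R) < (vol G (blue x))%:R / (vol G [set: 'I_n]%SET)%:R.

(* state at round t of a trajectory w : rounds 1..T (w i = X^(i+1)), X^(0) = x0 *)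
Definition state n (T : nat) (x0 : config n) (w : {ffun 'I_T -> config n}) (t : nat)
  : config n :=
  match t with
  | 0 => x0
  | t'.+1 => odflt x0 (omap w (insub t'))
  end.

Definition prob_tau_le (R : realType) (p : R) n (G : rel 'I_n) (x0 : config n) (T : nat) : R :=
  \sum_(w : {ffun 'I_T -> config n} | [exists t : 'I_T.+1, majB R G (state x0 w t)])
     \prod_(i < T) trans p G (state x0 w i) (state x0 w i.+1).

Definition mindeg_omega_log (R : realType) (G : forall n, rel 'I_n) : Prop :=
  forall M : R, exists N : nat, forall n : nat, (N <= n)%N ->
    forall u : 'I_n, M * ln (n%:R : R) <= (deg (G n) u)%:R.

(* Main.v *)
Require Import Defs.
From HB Require Import structures.
From mathcomp Require Import all_boot all_order all_algebra.
From mathcomp Require Import all_classical all_reals all_analysis.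
From mathcomp Require Import ring lra.
Import Order.TTheory GRing.Theory Num.Theory numFieldNormedType.Exports.
Local Open Scope ring_scope.

Module Helpers.
Set Implicit Arguments. Unset Strict Implicit. Unset Printing Implicit Defensive.

Section Prod.
Variable R : realType.

Definition PP n (q : 'I_n -> R) (y : {ffun 'I_n -> bool}) : R :=
  \prod_u (if y u then q u else 1 - q u).

Lemma factor n (H : 'I_n -> bool -> R) :
  \sum_(y : {ffun 'I_n -> bool}) \prod_u H u (y u) = \prod_u (H u true + H u false).
Proof.
rewrite -bigA_distr_bigA; apply: eq_bigr => u _; by rewrite big_bool.
Qed.

Lemma sumPP n q : \sum_y @PP n q y = 1.
Proof.
rewrite /PP (factor (fun u b => if b then q u else 1 - q u)).
by apply: big1 => u _ /=; rewrite addrC subrK.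
Qed.

Lemma prod_pick n (u : 'I_n) (a : R) :
  \prod_(i : 'I_n) (if i == u then a else 1) = a.
Proof.
rewrite (bigD1 u) //= eqxx big1 ?mulr1 // => i /negPf ->; done.
Qed.

Lemma cov n q (u v : 'I_n) :
  \sum_y @PP n q y * (((y u)%:R - q u) * ((y v)%:R - q v)) =
  if u == v then q u * (1 - q u) else 0.
Proof.
pose H i (b : bool) := (if b then q i else 1 - q i) *
   ((if i == u then (b%:R - q i) else 1) * (if i == v then (b%:R - q i) else 1)).
have E : forall y : {ffun 'I_n -> bool},
   PP q y * (((y u)%:R - q u) * ((y v)%:R - q v)) = \prod_i H i (y i).
  move=> y; rewrite /H big_split /= big_split /=.
  rewrite -(prod_pick u ((y u)%:R - q u)) -(prod_pick v ((y v)%:R - q v)).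
  congr (_ * (_ * _)); apply: eq_bigr => i _; case: eqP => // ->; done.
rewrite (eq_bigr _ (fun y _ => E y)) factor /H.
case: eqVneq => [<-|nuv].
  rewrite (bigD1 u) //= eqxx big1 ?mulr1.
    rewrite /=; ring.
  by move=> i /negPf ->; rewrite /= !mulr1; rewrite addrC subrK.
rewrite (bigD1 u) //= eqxx (negPf nuv) /= !mulr1.
idtac.
have -> : q u * (1 - q u) + (1 - q u) * (0 - q u) = 0 by ring.
by rewrite mul0r.
Qed.

Lemma variance n q (w : 'I_n -> R) :
  \sum_y @PP n q y * (\sum_u w u * ((y u)%:R - q u)) ^+ 2 =
  \sum_u w u ^+ 2 * (q u * (1 - q u)).
Proof.
have E : forall y : {ffun 'I_n -> bool}, PP q y * (\sum_u w u * ((y u)%:R - q u)) ^+ 2 =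
  \sum_u \sum_v w u * w v * (PP q y * (((y u)%:R - q u) * ((y v)%:R - q v))).
  move=> y; rewrite expr2 mulr_suml mulr_sumr; apply: eq_bigr => u _.
  rewrite mulr_sumr mulr_sumr; apply: eq_bigr => v _; ring.
rewrite (eq_bigr _ (fun y _ => E y)) exchange_big /=; apply: eq_bigr => u _.
rewrite exchange_big /= (bigD1 u) //= [X in _ + X]big1 ?addr0.
  by rewrite -mulr_sumr cov eqxx expr2.
move=> v nvu; by rewrite -mulr_sumr cov eq_sym (negPf nvu) mulr0.
Qed.

Lemma PP_ge0 n q y : (forall u, 0 <= q u <= 1) -> 0 <= @PP n q y.
Proof.
move=> hq; apply: prodr_ge0 => u _; case: (y u); have := hq u; case/andP => ? ?; lra.
Qed.

Lemma cheb n q (w : 'I_n -> R) (e : R) : (forall u, 0 <= q u <= 1) -> 0 < e ->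
  \sum_(y : {ffun 'I_n -> bool} | \sum_u w u * ((y u)%:R - q u) < - e) PP q y <=
  (\sum_u w u ^+ 2) / (4 * e ^+ 2).
Proof.
move=> hq he.
have h1 : \sum_(y : {ffun 'I_n -> bool} | \sum_u w u * ((y u)%:R - q u) < - e) PP q y <=
   \sum_y PP q y * ((\sum_u w u * ((y u)%:R - q u)) ^+ 2 / e ^+ 2).
  rewrite [X in _ <= X](bigID (fun y : {ffun 'I_n -> bool} => \sum_u w u * ((y u)%:R - q u) < - e)) /=.
  rewrite -[X in X <= _]addr0; apply: lerD; last first.
    apply: sumr_ge0 => y _; apply: mulr_ge0; first exact: PP_ge0.
    by apply: divr_ge0; apply: sqr_ge0.
  apply: ler_sum => y hy; rewrite -[X in X <= _]mulr1; apply: ler_wpM2l; first exact: PP_ge0.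
  rewrite ler_pdivlMr ?exprn_gt0 // mul1r.
  set s := \sum_u _ in hy *. rewrite -sqrrN. have : e <= - s by lra. move=> hh. nra.
apply: (le_trans h1).
under eq_bigr => y _ do rewrite mulrA.
rewrite -mulr_suml variance.
have e0 : e != 0 by lra.
have ee : 0 < e ^+ 2 by rewrite exprn_gt0.
set V := \sum_u _. set W := \sum_u _.

have -> : W / (4 * e ^+ 2) = (W / 4) / e ^+ 2 by field.
rewrite ler_pM2r ?invr_gt0 // /V /W mulr_suml; apply: ler_sum => u _.
have := hq u; case/andP => h0 h1'.
have hh : q u * (1 - q u) <= 4^-1.
  rewrite -subr_ge0; have -> : 4^-1 - q u * (1 - q u) = (q u - 2^-1)^+2 by field.
  exact: sqr_ge0.
by rewrite ler_wpM2l // sqr_ge0.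
Qed.
End Prod.

Section Graph.
Variable R : realType.
Variable n : nat.
Variable G : rel 'I_n.

Lemma sum_nbhd (f : 'I_n -> R) u :
  \sum_(v in nbhd G u) f v = \sum_v (G u v)%:R * f v.
Proof.
rewrite big_mkcond; apply: eq_bigr => v _; rewrite /nbhd inE.
by case: (G u v); rewrite ?mul1r ?mul0r.
Qed.

Lemma deg_R u : (deg G u)%:R = \sum_v (G u v)%:R :> R.
Proof.
rewrite /deg -sum1_card natr_sum sum_nbhd; apply: eq_bigr => v _.
by rewrite mulr1.
Qed.

Lemma deg_le u : (deg G u <= n)%N.
Proof. by rewrite /deg -[X in (_ <= X)%N]card_ord max_card. Qed.

Lemma vol_R (S : {set 'I_n}) : (vol G S)%:R = \sum_(v in S) (deg G v)%:R :> R.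
Proof. by rewrite /vol natr_sum. Qed.

Lemma vol_blue (y : config n) :
  (vol G (blue y))%:R = \sum_v (deg G v)%:R * (y v)%:R :> R.
Proof.
rewrite vol_R big_mkcond; apply: eq_bigr => v _; rewrite /blue inE.
by case: (y v); rewrite ?mulr1 ?mulr0.
Qed.

Lemma vol_T : (vol G [set: 'I_n])%:R = \sum_v (deg G v)%:R :> R.
Proof. by rewrite vol_R; apply: eq_bigl => v; rewrite inE. Qed.

Hypothesis Gsym : forall u v, G u v = G v u.
Hypothesis degpos : forall u, (0 < deg G u)%N.
Variable p : R.
Hypothesis hp0 : 0 < p.
Hypothesis hp1 : p <= 1.

Lemma probB_01 (x : config n) u : 0 <= probB p G x u <= 1.
Proof.
rewrite /probB (negPf (lt0n_neq0 (degpos u))).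
have d0 : 0 < (deg G u)%:R :> R by rewrite ltr0n.
have hb : forall v, 0 <= p + (1 - p) * (x v)%:R <= 1.
  move=> v; case: (x v) => /=; rewrite ?mulr1n ?mulr0n ?mulr1 ?mulr0 ?addr0.
  - by rewrite addrC subrK lexx ler01.
  - by rewrite (ltW hp0) hp1.
apply/andP; split.
  apply: sumr_ge0 => v _; apply: mulr_ge0; first by rewrite invr_ge0 ltW.
  by case/andP: (hb v).
apply: (@le_trans _ _ (\sum_(v in nbhd G u) (deg G u)%:R^-1)).
  apply: ler_sum => v _; rewrite -[X in _ <= X]mulr1 ler_wpM2l ?invr_ge0 ?(ltW d0) //.
  by case/andP: (hb v).
rewrite sumr_const -[_ *+ #|_|]mulr_natr -/(deg G u) mulVf //; by rewrite gt_eqF.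
Qed.

Lemma mean (x : config n) :
  \sum_u (deg G u)%:R * probB p G x u =
  p * (vol G [set: 'I_n])%:R + (1 - p) * (vol G (blue x))%:R.
Proof.
have E : forall u, (deg G u)%:R * probB p G x u =
   p * (deg G u)%:R + (1 - p) * \sum_v (G u v)%:R * (x v)%:R.
  move=> u; rewrite /probB (negPf (lt0n_neq0 (degpos u))).
  have d0 : (deg G u)%:R != 0 :> R by rewrite pnatr_eq0 -lt0n.
  rewrite [LHS]mulr_sumr (eq_bigr (fun v => p + (1 - p) * (x v)%:R)); last first.
    by move=> v _; rewrite mulrA divff // mul1r.
  rewrite sum_nbhd deg_R !mulr_sumr -big_split /=; apply: eq_bigr => v _; ring.
rewrite (eq_bigr _ (fun u _ => E u)) big_split /= -mulr_sumr -mulr_sumr vol_T vol_blue.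
congr (_ + _ * _). rewrite exchange_big /=; apply: eq_bigr => v _.
rewrite -mulr_suml deg_R; congr (_ * _); apply: eq_bigr => u _; by rewrite Gsym.
Qed.

End Graph.

Section Traj.
Variable R : realType.
Variable n : nat.
Notation X := (config n).

Definition ext T (f : {ffun 'I_T -> X}) (y : X) : {ffun 'I_T.+1 -> X} :=
  [ffun i : 'I_T.+1 => if @insub _ (fun k => (k < T)%N) 'I_T (val i) is Some j then f j else y].

Definition restr T (w : {ffun 'I_T.+1 -> X}) : {ffun 'I_T -> X} :=
  [ffun j : 'I_T => w (widen_ord (leqnSn T) j)].

Lemma peel T (F : {ffun 'I_T.+1 -> X} -> R) :
  \sum_w F w = \sum_(f : {ffun 'I_T -> X}) \sum_(y : X) F (ext f y).
Proof.
rewrite pair_big /=.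
rewrite (reindex (fun pr : {ffun 'I_T -> X} * X => ext pr.1 pr.2)) /=; last first.
  exists (fun w => (restr w, w ord_max)).
    move=> [f y] _ /=; congr (_, _).
      apply/ffunP => j; rewrite !ffunE /= insubT //= => hj.
      by congr (f _); apply: val_inj.
    by rewrite ffunE /= insubF // ltnn.
  move=> w _; apply/ffunP => i; rewrite ffunE /=.
  case: insubP => [j hj vj|]; first by rewrite ffunE; congr (w _); apply: val_inj.
  rewrite -ltnNge => hi; congr (w _); apply: val_inj => /=.
  by apply/eqP; rewrite eqn_leq; apply/andP; split; [exact: hi | rewrite -ltnS; exact: ltn_ord].
by apply: eq_bigl.
Qed.

Variable x0 : X.

Lemma state_ext T (f : {ffun 'I_T -> X}) y t :
  (t <= T)%N -> state x0 (ext f y) t = state x0 f t.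
Proof.
case: t => [|t] //= ht.
have ht1 : (t < T.+1)%N by apply: ltnW.
rewrite (insubT (fun k => (k < T.+1)%N) ht1) /= ffunE /=.
by rewrite !(insubT (fun k => (k < T)%N) ht).
Qed.

Lemma state_ext_last T (f : {ffun 'I_T -> X}) y :
  state x0 (ext f y) T.+1 = y.
Proof.
rewrite /= (insubT (fun k => (k < T.+1)%N) (ltnSn T)) /= ffunE /=.
by rewrite insubF // ltnn.
Qed.

Variable K : X -> X -> R.
Hypothesis K0 : forall x y, 0 <= K x y.
Hypothesis K1 : forall x, \sum_y K x y = 1.

Definition weight T (w : {ffun 'I_T -> X}) :=
  \prod_(i < T) K (state x0 w i) (state x0 w i.+1).

Lemma weight_ext T f y : weight (@ext T f y) = weight f * K (state x0 f T) y.
Proof.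
rewrite /weight big_ord_recr; congr (_ * _); last by rewrite state_ext // state_ext_last.
apply: eq_bigr => i _; rewrite !state_ext //=; exact: ltnW (ltn_ord i).
Qed.

Lemma weight_ge0 T w : 0 <= @weight T w.
Proof. by apply: prodr_ge0 => i _; apply: K0. Qed.

Lemma sum_ffun0 (F : {ffun 'I_0 -> X} -> R) (P : pred {ffun 'I_0 -> X}) :
  \sum_(w | P w) F w = if P [ffun i => x0] then F [ffun i => x0] else 0.
Proof.
rewrite big_mkcond (big_pred1 [ffun i => x0]) // => w /=.
apply/esym/eqP/ffunP => i; case: i => i hi; by [] .
Qed.

Lemma total_mass T : \sum_(w : {ffun 'I_T -> X}) weight w = 1.
Proof.
elim: T => [|T IH].
  by rewrite (sum_ffun0 _ xpredT) /= /weight big_ord0.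
rewrite peel -[RHS]IH; apply: eq_bigr => f _.
under eq_bigr => y _ do rewrite weight_ext.
by rewrite -mulr_sumr K1 mulr1.
Qed.

Variable g : nat -> X -> bool.

Definition allg T (w : {ffun 'I_T -> X}) :=
  \big[andb/true]_(t < T.+1) g t (state x0 w t).

Lemma allg_ext T f y : allg (@ext T f y) = allg f && g T.+1 y.
Proof.
rewrite /allg big_ord_recr; congr (_ && _); last by rewrite state_ext_last.
apply: eq_bigr => i _; rewrite state_ext //=; exact: (ltn_ord i).
Qed.

Variable eta : R.
Hypothesis g0 : g 0 x0.
Hypothesis gstep : forall t x, g t x -> \sum_(y | ~~ g t.+1 y) K x y <= eta.

Lemma good T : 1 - T%:R * eta <= \sum_(w | allg w) @weight T w.
Proof.
have eta0 : 0 <= eta.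
  by apply: le_trans (gstep g0); apply: sumr_ge0 => y _; apply: K0.
elim: T => [|T IH].
  by rewrite (sum_ffun0 _ (@allg 0)) /allg big_ord_recr big_ord0 /= g0 /weight big_ord0 mul0r subr0.
set S := \sum_(w | allg w) @weight T w in IH.
have S1 : S <= 1.
  rewrite -(total_mass T) /S [X in _ <= X](bigID (@allg T)) /= lerDl.
  by apply: sumr_ge0 => w _; apply: weight_ge0.
have S0 : 0 <= S by apply: sumr_ge0 => w _; apply: weight_ge0.
have : S - eta * S <= \sum_(w | allg w) @weight T.+1 w.
  rewrite big_mkcond peel /S big_mkcond mulr_sumr -sumrB; apply: ler_sum => f _.
  under eq_bigr => y _ do rewrite allg_ext weight_ext.
  case hf: (allg f) => /=; last by rewrite mulr0 subrr big1.
  rewrite -big_mkcond /= -mulr_sumr.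
  have hg : g T (state x0 f T).
    by move: hf; rewrite /allg big_ord_recr /= => /andP [].
  have := gstep hg; have := K1 (state x0 f T).
  rewrite (bigID (fun y => g T.+1 y)) /= => hK hb.
  have w0 := weight_ge0 f.
  set A := \sum_(y | g T.+1 y) _ in hK *. set B := \sum_(y | ~~ g T.+1 y) _ in hK hb *.
  have -> : A = 1 - B by rewrite -hK addrK.
  nra.
move=> h; apply: le_trans h.
rewrite -natr1 mulrDl mul1r.
nra.
Qed.

End Traj.

Lemma Bern (R : realType) (p : R) (T : nat) : 0 <= p -> p <= 1 ->
  (1 - p) ^+ T * (1 + T%:R * p) <= 1.
Proof.
move=> h0 h1; elim: T => [|T IH]; first by rewrite expr0 mul0r addr0 mulr1.
have X0 : 0 <= (1 - p) ^+ T by apply: exprn_ge0; lra.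
have T0 : 0 <= T%:R :> R by apply: ler0n.
rewrite exprS -natr1.
set X := (1 - p) ^+ T in IH X0 *.
have : (1 - p) * (1 + (T%:R + 1) * p) <= 1 + T%:R * p by nra.
move=> h; apply: le_trans IH.
have -> : (1 - p) * X * (1 + (T%:R + 1) * p) = X * ((1 - p) * (1 + (T%:R + 1) * p)) by ring.
by apply: ler_wpM2l.
Qed.

Lemma sub_sum (R : realType) (I : finType) (P Q : pred I) (F : I -> R) :
  (forall i, P i -> Q i) -> (forall i, 0 <= F i) ->
  \sum_(i | P i) F i <= \sum_(i | Q i) F i.
Proof.
move=> hPQ hF; rewrite big_mkcond [X in _ <= X]big_mkcond; apply: ler_sum => i _.
case hP: (P i); first by rewrite (hPQ i hP).
by case: (Q i).
Qed.

Lemma step (R : realType) n (G : rel 'I_n) (p : R) (M e : R) :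
  (forall u v, G u v = G v u) -> 0 < p -> p <= 1 -> 0 < M ->
  (forall u, M <= (deg G u)%:R) -> (0 < n)%N -> 0 < e -> forall x : config n,
  \sum_(y : config n | (vol G (blue y))%:R < p * (vol G [set: 'I_n])%:R + (1 - p) * (vol G (blue x))%:R
        - e * (vol G [set: 'I_n])%:R) trans p G x y <= 1 / (4 * e ^+ 2 * M).
Proof.
move=> Gs hp0 hp1 hM hdeg hn he x.
have degpos : forall u, (0 < deg G u)%N.
  by move=> u; rewrite -(ltr0n R); apply: lt_le_trans (hdeg u).
set V := (vol G [set: 'I_n])%:R.
have hq := probB_01 degpos hp0 hp1 x.
set q := probB p G x in hq.
have E : forall y : config n, (vol G (blue y))%:R - (p * V + (1 - p) * (vol G (blue x))%:R)
   = \sum_u (deg G u)%:R * ((y u)%:R - q u).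
  move=> y; rewrite -(mean Gs degpos p x) vol_blue -sumrB; apply: eq_bigr => u _. by rewrite mulrBr.
rewrite (eq_bigl (fun y : config n => \sum_u (deg G u)%:R * ((y u)%:R - q u) < - (e * V))); last first.
  move=> y /=; rewrite -E; apply/idP/idP => h; lra.
have VnM : n%:R * M <= V.
  rewrite /V vol_T; apply: le_trans (_ : \sum_(u < n) M <= _); first by rewrite sumr_const card_ord mulr_natl.
  by apply: ler_sum => u _; exact: hdeg.
have V0 : 0 < V by apply: lt_le_trans VnM; apply: mulr_gt0; rewrite ?ltr0n.
have C := cheb (fun u => (deg G u)%:R) hq (mulr_gt0 he V0). simpl in C. rewrite /trans. eapply le_trans; first exact: C.
have S : \sum_u (deg G u)%:R ^+ 2 <= n%:R * V :> R.
  rewrite /V vol_T mulr_sumr; apply: ler_sum => u _; rewrite expr2 ler_wpM2r ?ler0n //.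
  by rewrite ler_nat deg_le.
apply: le_trans (_ : n%:R * V / (4 * (e * V) ^+ 2) <= _).
  by apply: ler_wpM2r => //; rewrite invr_ge0; apply: mulr_ge0 => //; apply: sqr_ge0.
have -> : n%:R * V / (4 * (e * V) ^+ 2) = n%:R / (4 * e ^+ 2 * V).
  by field; apply/andP; split; lra.
have e2 : 0 < e ^+ 2 by apply: exprn_gt0.
rewrite ler_pdivrMr; last by apply: mulr_gt0 => //; apply: mulr_gt0.
have -> : 1 / (4 * e ^+ 2 * M) * (4 * e ^+ 2 * V) = V / M by field; apply/andP; split; lra.
by rewrite ler_pdivlMr.
Qed.

End Helpers.
Import Helpers.

Local Open Scope classical_set_scope.

Theorem proposition6p1 (R : realType) (p : R) (hp0 : 0 < p) (hp1 : p <= 1) :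
  exists T : nat,
    forall (G : forall n : nat, rel 'I_n) (X0 : forall n : nat, config n),
      (forall n, simple_graph (G n)) ->
      mindeg_omega_log R G ->
      prob_tau_le p (G n) (X0 n) T @[n --> \oo] --> (1 : R).
Proof.
pose T := (Num.Def.trunc (3 / p)).+1.
have hT : 3 < T%:R * p.
  have := truncnS_gt (3 / p); rewrite -/T => h.
  by rewrite -ltr_pdivrMr.
have T0 : 0 < T%:R :> R by rewrite ltr0n.
have hT1 : (1 - p) ^+ T <= 1 / 4.
  have := Bern T (ltW hp0) hp1; have : 0 <= (1 - p) ^+ T by apply: exprn_ge0; lra.
  move=> h1 h2; nra.
pose eps : R := 1 / (8 * T%:R).
have eps0 : 0 < eps by apply: divr_gt0 => //; apply: mulr_gt0.
have Teps : T%:R * eps = 1 / 8 by rewrite /eps; field; lra.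
exists T => G X0 Gs Hdeg.
apply/cvgrPdist_le => e he.
pose M' := T%:R / (4 * eps ^+ 2 * e) + 1.
have M'0 : 0 < M'.
  rewrite /M'; have : 0 <= T%:R / (4 * eps ^+ 2 * e).
    apply: divr_ge0; first exact: ltW.
    by apply: mulr_ge0; [apply: mulr_ge0; [lra| apply: sqr_ge0] | exact: ltW].
  lra.
have ln20 : 0 < ln (2 : R) by apply: ln_gt0; lra.
have [N HN] := Hdeg (M' / ln 2).
exists (maxn N 2) => // n /= hn.
have hnN : (N <= n)%N by apply: leq_trans hn; apply: leq_maxl.
have hn2 : (2 <= n)%N by apply: leq_trans hn; apply: leq_maxr.
have degM : forall u, M' <= (deg (G n) u)%:R.
  move=> u; apply: le_trans (HN n hnN u).
  have l2 : ln 2 <= ln (n%:R : R).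
    rewrite ler_ln ?posrE ?ltr0n //; first by rewrite ler_nat.
    by apply: leq_trans hn2.
  rewrite [X in X <= _](_ : M' = M' / ln 2 * ln 2); last by field; lra.
  apply: ler_wpM2l => //; apply: divr_ge0; [exact: ltW | exact: ltW].
have [Gsym _] := Gs n.
have degpos : forall u, (0 < deg (G n) u)%N.
  by move=> u; rewrite -(ltr0n R); apply: lt_le_trans (degM u).
have hn1 : (0 < n)%N by apply: leq_trans hn2.
pose V : R := (vol (G n) [set: 'I_n])%:R.
have V0 : 0 < V.
  rewrite /V vol_T; apply: lt_le_trans (_ : \sum_(u < n) M' <= _).
    by rewrite sumr_const card_ord -mulr_natl; apply: mulr_gt0; rewrite ?ltr0n.
  by apply: ler_sum => u _; exact: degM.
pose c (t : nat) : R := (1 - p) ^+ t + t%:R * eps.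
pose g := fun (t : nat) (y : config n) => (1 - c t) * V <= (vol (G n) (blue y))%:R.
pose K := trans p (G n).
pose eta : R := 1 / (4 * eps ^+ 2 * M').
have K0 : forall x y, 0 <= K x y.
  by move=> x y; exact: (PP_ge0 y (probB_01 degpos hp0 hp1 x)).
have K1 : forall x, \sum_y K x y = 1 by move=> x; exact: sumPP.
have g0 : g 0 (X0 n) by rewrite /g /c expr0 mul0r addr0 subrr mul0r ler0n.
have gstep : forall t x, g t x -> \sum_(y | ~~ g t.+1 y) K x y <= eta.
  move=> t x gx.
  apply: le_trans (step Gsym hp0 hp1 M'0 degM hn1 eps0 x).
  apply: sub_sum; last by move=> y; apply: K0.
  move=> y; rewrite ltNge; apply: contra => h.
  rewrite /g.
  have key : (1 - c t.+1) * V <= p * V + (1 - p) * ((1 - c t) * V) - eps * V.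
    rewrite -subr_ge0.
    have -> : p * V + (1 - p) * ((1 - c t) * V) - eps * V - (1 - c t.+1) * V
       = t%:R * eps * p * V by rewrite /c exprS -natr1; ring.
    by apply: mulr_ge0; [apply: mulr_ge0; [apply: mulr_ge0; [apply: ler0n| exact: ltW] | exact: ltW] | exact: ltW].
  have h2 : (1 - p) * ((1 - c t) * V) <= (1 - p) * (vol (G n) (blue x))%:R.
    by apply: ler_wpM2l; [lra | exact: gx].
  rewrite -/V in h; lra.
have G1 := good K0 K1 g0 gstep T.
have Tc : c T <= 3 / 8 by rewrite /c Teps; lra.
have Pge : \sum_(w : {ffun 'I_T -> config n} | allg (X0 n) g w) weight (X0 n) K w <= prob_tau_le p (G n) (X0 n) T.
  rewrite /prob_tau_le; apply: sub_sum; last by move=> w; apply: weight_ge0.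
  move=> w; rewrite /allg big_ord_recr /= => /andP [_ hw].
  apply/existsP; exists ord_max; rewrite /majB.
  rewrite ltr_pdivlMr -/V //.
  have : (1 - c T) * V >= 5 / 8 * V by apply: ler_wpM2r; [exact: ltW | lra].
  move: hw; rewrite /g /= => hw; lra.
have Ple : prob_tau_le p (G n) (X0 n) T <= 1.
  rewrite -(total_mass (X0 n) K1 T); apply: sub_sum => // w; exact: weight_ge0.
have Teta : T%:R * eta <= e.
  have D0 : 0 < 4 * eps ^+ 2 by apply: mulr_gt0; [lra | apply: exprn_gt0].
  rewrite /eta mulrA mulr1 ler_pdivrMr; last by apply: mulr_gt0.
  have -> : e * (4 * eps ^+ 2 * M') = T%:R + e * (4 * eps ^+ 2).
    by rewrite /M'; field; apply/andP; split; lra.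
  have : 0 < e * (4 * eps ^+ 2) by apply: mulr_gt0.
  lra.
rewrite ger0_norm; last by lra.
lra.
Qed.
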